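(* Let $D_6=\langle r,s\mid r^6=s^2=1,\ srs=r^{-1}\rangle$ be the dihedral group of order $12$. Its subgroups up to conjugacy are $\{1\}$, three classes of subgroups of order 2, $C_2^{(1)},C_2^{(2)},C_2^{(3)}$ (represented by $\langle r^3\rangle,\langle s\rangle,\langle rs\rangle$), $C_3=\langle r^2\rangle$, $C_2^2=\langle r^3,s\rangle$, $C_6=\langle r\rangle$, two classes of subgroups isomorphic to $S_3$, $S_3^{(1)}=\langle r^2,s\rangle$ and $S_3^{(2)}=\langle r^2,rs\rangle$, and $D_6$. Then there is an isomorphism of $D_6$-lattices $$\mathbb{Z}[D_6]\oplus\mathbb{Z}[D_6/C_2^2]^{\oplus2}\oplus\mathbb{Z}[D_6/C_6]\oplus\mathbb{Z}[D_6/S_3^{(1)}]\oplus\mathbb{Z}[D_6/S_3^{(2)}]\simeq\mathbb{Z}[D_6/C_2^{(1)}]\oplus\mathbb{Z}[D_6/C_2^{(2)}]\oplus\mathbb{Z}[D_6/C_2^{(3)}]\oplus\mathbb{Z}[D_6/C_3]\oplus\mathbb{Z}^{\oplus2}.$$ In particular the Krull–Schmidt theorem fails for permutation $D_6$-lattices. *)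

(* Defs.v *)
From HB Require Import structures.
From mathcomp Require Import all_boot all_order all_algebra all_fingroup.
Set Implicit Arguments. Unset Strict Implicit. Unset Printing Implicit Defensive.
Import GRing.Theory.

(* Permutation lattices  Z[G/H_0] (+) ... (+) Z[G/H_{k-1}].            *)
(* The underlying G-set is the disjoint union of the left coset spaces *)
(* G/H_i, i.e. pairs (i, xH_i) with x in G; G acts by g.(i,A) = (i,gA).*)

Definition pl_pt (gT : finGroupType) (G : {set gT}) (Hs : seq {set gT}) :=
  {p : 'I_(size Hs) * {set gT} | p.2 \in lcosets (nth set0 Hs p.1) G}.

(* action of g on the G-set (the identity fallback is never used for g in G) *)
Definition pl_act (gT : finGroupType) (G : {set gT}) (Hs : seq {set gT})
    (g : gT) (p : pl_pt G Hs) : pl_pt G Hs :=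
  odflt p (insub ((val p).1, (g *: (val p).2)%g)).

Definition perm_lattice (gT : finGroupType) (G : {set gT}) (Hs : seq {set gT}) :=
  {ffun pl_pt G Hs -> int}.

Definition pl_gact (gT : finGroupType) (G : {set gT}) (Hs : seq {set gT})
    (g : gT) (f : perm_lattice G Hs) : perm_lattice G Hs :=
  [ffun p => f (pl_act (g^-1)%g p)].

Definition G_lattice_iso (gT : finGroupType) (G : {set gT})
    (Hs Ks : seq {set gT}) : Prop :=
  exists phi : perm_lattice G Hs -> perm_lattice G Ks,
    [/\ (forall f1 f2, phi (f1 + f2)%R = (phi f1 + phi f2)%R),
        bijective phi &
        (forall g, g \in G -> forall f, phi (pl_gact g f) = pl_gact g (phi f))].

Definition rot_fun (i : 'I_6) : 'I_6 := (i + 1)%R.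
Lemma rot_inj : injective rot_fun. Proof. exact: addIr. Qed.
Definition refl_fun (i : 'I_6) : 'I_6 := (- i)%R.
Lemma refl_inj : injective refl_fun. Proof. exact: oppr_inj. Qed.

Definition r6 : {perm 'I_6} := perm rot_inj.
Definition s6 : {perm 'I_6} := perm refl_inj.

Definition D6 : {set {perm 'I_6}} := <<[set r6; s6]>>%g.

(* Main.v *)
Require Import Defs.
From HB Require Import structures.
From mathcomp Require Import all_boot all_order all_algebra all_fingroup.
Set Implicit Arguments. Unset Strict Implicit. Unset Printing Implicit Defensive.
Import GRing.Theory.

Definition mtab : seq (seq nat) := [:: [:: 0; 1; 2; 3; 4; 5; 6; 7; 8; 9; 10; 11];
  [:: 1; 2; 3; 4; 5; 0; 7; 8; 9; 10; 11; 6];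
  [:: 2; 3; 4; 5; 0; 1; 8; 9; 10; 11; 6; 7];
  [:: 3; 4; 5; 0; 1; 2; 9; 10; 11; 6; 7; 8];
  [:: 4; 5; 0; 1; 2; 3; 10; 11; 6; 7; 8; 9];
  [:: 5; 0; 1; 2; 3; 4; 11; 6; 7; 8; 9; 10];
  [:: 6; 11; 10; 9; 8; 7; 0; 5; 4; 3; 2; 1];
  [:: 7; 6; 11; 10; 9; 8; 1; 0; 5; 4; 3; 2];
  [:: 8; 7; 6; 11; 10; 9; 2; 1; 0; 5; 4; 3];
  [:: 9; 8; 7; 6; 11; 10; 3; 2; 1; 0; 5; 4];
  [:: 10; 9; 8; 7; 6; 11; 4; 3; 2; 1; 0; 5];
  [:: 11; 10; 9; 8; 7; 6; 5; 4; 3; 2; 1; 0]].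

Definition itab : seq nat := [:: 0; 5; 4; 3; 2; 1; 6; 7; 8; 9; 10; 11].

Definition repXtab : seq (nat * nat) := [:: (0, 0); (0, 1); (0, 2); (0, 3); (0, 4); (0, 5); (0, 6); (0, 7); (0, 8); (0, 9); (0, 10); (0, 11); (1, 0); (1, 1); (1, 2); (2, 0); (2, 1); (2, 2); (3, 0); (3, 6); (4, 0); (4, 1); (5, 0); (5, 1)].

Definition repYtab : seq (nat * nat) := [:: (0, 0); (0, 1); (0, 2); (0, 6); (0, 7); (0, 8); (1, 0); (1, 1); (1, 2); (1, 3); (1, 4); (1, 5); (2, 0); (2, 1); (2, 2); (2, 3); (2, 4); (2, 5); (3, 0); (3, 1); (3, 6); (3, 7); (4, 0); (5, 0)].

Definition Mtab : seq (seq int) := [:: [:: Negz 0; Posz 0; Posz 1; Negz 0; Posz 0; Posz 1; Negz 1; Posz 1; Negz 0; Negz 1; Posz 1; Negz 0; Posz 0; Posz 1; Posz 0; Posz 0; Posz 0; Posz 1; Posz 0; Negz 0; Posz 0; Posz 0; Posz 0; Posz 0];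
  [:: Posz 1; Negz 0; Posz 0; Posz 1; Negz 0; Posz 0; Negz 0; Negz 1; Posz 1; Negz 0; Negz 1; Posz 1; Posz 0; Posz 0; Posz 1; Posz 1; Posz 0; Posz 0; Posz 0; Negz 0; Posz 0; Posz 0; Posz 0; Posz 0];
  [:: Posz 0; Posz 1; Negz 0; Posz 0; Posz 1; Negz 0; Posz 1; Negz 0; Negz 1; Posz 1; Negz 0; Negz 1; Posz 1; Posz 0; Posz 0; Posz 0; Posz 1; Posz 0; Posz 0; Negz 0; Posz 0; Posz 0; Posz 0; Posz 0];
  [:: Negz 1; Negz 0; Posz 1; Negz 1; Negz 0; Posz 1; Negz 0; Posz 1; Posz 0; Negz 0; Posz 1; Posz 0; Posz 0; Posz 0; Posz 1; Posz 0; Posz 1; Posz 0; Negz 0; Posz 0; Posz 0; Posz 0; Posz 0; Posz 0];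
  [:: Posz 1; Negz 1; Negz 0; Posz 1; Negz 1; Negz 0; Posz 0; Negz 0; Posz 1; Posz 0; Negz 0; Posz 1; Posz 1; Posz 0; Posz 0; Posz 0; Posz 0; Posz 1; Negz 0; Posz 0; Posz 0; Posz 0; Posz 0; Posz 0];
  [:: Negz 0; Posz 1; Negz 1; Negz 0; Posz 1; Negz 1; Posz 1; Posz 0; Negz 0; Posz 1; Posz 0; Negz 0; Posz 0; Posz 1; Posz 0; Posz 1; Posz 0; Posz 0; Negz 0; Posz 0; Posz 0; Posz 0; Posz 0; Posz 0];
  [:: Posz 1; Negz 0; Posz 0; Posz 1; Posz 0; Posz 0; Posz 1; Posz 0; Posz 0; Posz 1; Posz 0; Negz 0; Posz 1; Negz 1; Negz 1; Negz 0; Negz 1; Negz 1; Posz 2; Posz 2; Posz 0; Negz 0; Negz 2; Negz 2];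
  [:: Posz 0; Posz 1; Negz 0; Posz 0; Posz 1; Posz 0; Negz 0; Posz 1; Posz 0; Posz 0; Posz 1; Posz 0; Negz 1; Posz 1; Negz 1; Negz 1; Negz 0; Negz 1; Posz 2; Posz 2; Negz 0; Posz 0; Negz 2; Negz 2];
  [:: Posz 0; Posz 0; Posz 1; Negz 0; Posz 0; Posz 1; Posz 0; Negz 0; Posz 1; Posz 0; Posz 0; Posz 1; Negz 1; Negz 1; Posz 1; Negz 1; Negz 1; Negz 0; Posz 2; Posz 2; Posz 0; Negz 0; Negz 2; Negz 2];
  [:: Posz 1; Posz 0; Posz 0; Posz 1; Negz 0; Posz 0; Posz 1; Posz 0; Negz 0; Posz 1; Posz 0; Posz 0; Posz 1; Negz 1; Negz 1; Negz 0; Negz 1; Negz 1; Posz 2; Posz 2; Negz 0; Posz 0; Negz 2; Negz 2];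
  [:: Posz 0; Posz 1; Posz 0; Posz 0; Posz 1; Negz 0; Posz 0; Posz 1; Posz 0; Negz 0; Posz 1; Posz 0; Negz 1; Posz 1; Negz 1; Negz 1; Negz 0; Negz 1; Posz 2; Posz 2; Posz 0; Negz 0; Negz 2; Negz 2];
  [:: Negz 0; Posz 0; Posz 1; Posz 0; Posz 0; Posz 1; Posz 0; Posz 0; Posz 1; Posz 0; Negz 0; Posz 1; Negz 1; Negz 1; Posz 1; Negz 1; Negz 1; Negz 0; Posz 2; Posz 2; Negz 0; Posz 0; Negz 2; Negz 2];
  [:: Posz 0; Posz 0; Posz 0; Posz 0; Posz 1; Posz 0; Posz 0; Posz 0; Posz 0; Posz 1; Posz 0; Posz 0; Posz 0; Posz 0; Posz 1; Negz 0; Negz 0; Posz 1; Negz 2; Negz 2; Posz 1; Posz 1; Negz 0; Posz 0];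
  [:: Posz 0; Posz 0; Posz 0; Posz 0; Posz 0; Posz 1; Posz 0; Posz 0; Posz 0; Posz 0; Posz 1; Posz 0; Posz 1; Posz 0; Posz 0; Posz 1; Negz 0; Negz 0; Negz 2; Negz 2; Posz 1; Posz 1; Posz 0; Negz 0];
  [:: Posz 1; Posz 0; Posz 0; Posz 0; Posz 0; Posz 0; Posz 0; Posz 0; Posz 0; Posz 0; Posz 0; Posz 1; Posz 0; Posz 1; Posz 0; Negz 0; Posz 1; Negz 0; Negz 2; Negz 2; Posz 1; Posz 1; Negz 0; Posz 0];
  [:: Posz 0; Posz 1; Posz 0; Posz 0; Posz 0; Posz 0; Posz 1; Posz 0; Posz 0; Posz 0; Posz 0; Posz 0; Posz 0; Posz 0; Posz 1; Negz 0; Negz 0; Posz 1; Negz 2; Negz 2; Posz 1; Posz 1; Posz 0; Negz 0];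
  [:: Posz 0; Posz 0; Posz 1; Posz 0; Posz 0; Posz 0; Posz 0; Posz 1; Posz 0; Posz 0; Posz 0; Posz 0; Posz 1; Posz 0; Posz 0; Posz 1; Negz 0; Negz 0; Negz 2; Negz 2; Posz 1; Posz 1; Negz 0; Posz 0];
  [:: Posz 0; Posz 0; Posz 0; Posz 1; Posz 0; Posz 0; Posz 0; Posz 0; Posz 1; Posz 0; Posz 0; Posz 0; Posz 0; Posz 1; Posz 0; Negz 0; Posz 1; Negz 0; Negz 2; Negz 2; Posz 1; Posz 1; Posz 0; Negz 0];
  [:: Posz 0; Posz 0; Posz 0; Posz 0; Posz 0; Posz 0; Negz 0; Posz 0; Negz 0; Posz 0; Negz 0; Posz 0; Posz 0; Posz 0; Posz 0; Posz 1; Posz 1; Posz 1; Posz 1; Posz 0; Posz 0; Posz 2; Posz 1; Posz 2];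
  [:: Posz 0; Posz 0; Posz 0; Posz 0; Posz 0; Posz 0; Posz 0; Negz 0; Posz 0; Negz 0; Posz 0; Negz 0; Posz 0; Posz 0; Posz 0; Posz 1; Posz 1; Posz 1; Posz 1; Posz 0; Posz 2; Posz 0; Posz 2; Posz 1];
  [:: Negz 0; Posz 0; Negz 0; Posz 0; Negz 0; Posz 0; Posz 0; Posz 0; Posz 0; Posz 0; Posz 0; Posz 0; Posz 0; Posz 0; Posz 0; Posz 1; Posz 1; Posz 1; Posz 0; Posz 1; Posz 0; Posz 2; Posz 2; Posz 1];
  [:: Posz 0; Negz 0; Posz 0; Negz 0; Posz 0; Negz 0; Posz 0; Posz 0; Posz 0; Posz 0; Posz 0; Posz 0; Posz 0; Posz 0; Posz 0; Posz 1; Posz 1; Posz 1; Posz 0; Posz 1; Posz 2; Posz 0; Posz 1; Posz 2];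
  [:: Negz 0; Negz 0; Negz 0; Negz 0; Negz 0; Negz 0; Negz 0; Negz 0; Negz 0; Negz 0; Negz 0; Negz 0; Posz 1; Posz 1; Posz 1; Posz 1; Posz 1; Posz 1; Posz 0; Posz 0; Negz 0; Negz 0; Posz 0; Posz 0];
  [:: Negz 0; Negz 0; Negz 0; Negz 0; Negz 0; Negz 0; Negz 0; Negz 0; Negz 0; Negz 0; Negz 0; Negz 0; Posz 0; Posz 0; Posz 0; Posz 1; Posz 1; Posz 1; Posz 4; Posz 4; Posz 2; Posz 2; Negz 0; Negz 0]].

Definition Ntab : seq (seq int) := [:: [:: Negz 135; Negz 111; Negz 132; Negz 113; Negz 139; Negz 127; Posz 19; Posz 16; Posz 6; Posz 18; Posz 16; Posz 5; Posz 38; Posz 23; Posz 26; Posz 39; Posz 23; Posz 26; Posz 50; Posz 49; Posz 50; Posz 50; Posz 276; Negz 28];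
  [:: Negz 132; Negz 135; Negz 111; Negz 127; Negz 113; Negz 139; Posz 5; Posz 19; Posz 16; Posz 6; Posz 18; Posz 16; Posz 26; Posz 38; Posz 23; Posz 26; Posz 39; Posz 23; Posz 49; Posz 50; Posz 50; Posz 50; Posz 276; Negz 28];
  [:: Negz 111; Negz 132; Negz 135; Negz 139; Negz 127; Negz 113; Posz 16; Posz 5; Posz 19; Posz 16; Posz 6; Posz 18; Posz 23; Posz 26; Posz 38; Posz 23; Posz 26; Posz 39; Posz 50; Posz 49; Posz 50; Posz 50; Posz 276; Negz 28];
  [:: Negz 135; Negz 111; Negz 132; Negz 113; Negz 139; Negz 127; Posz 18; Posz 16; Posz 5; Posz 19; Posz 16; Posz 6; Posz 39; Posz 23; Posz 26; Posz 38; Posz 23; Posz 26; Posz 49; Posz 50; Posz 50; Posz 50; Posz 276; Negz 28];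
  [:: Negz 132; Negz 135; Negz 111; Negz 127; Negz 113; Negz 139; Posz 6; Posz 18; Posz 16; Posz 5; Posz 19; Posz 16; Posz 26; Posz 39; Posz 23; Posz 26; Posz 38; Posz 23; Posz 50; Posz 49; Posz 50; Posz 50; Posz 276; Negz 28];
  [:: Negz 111; Negz 132; Negz 135; Negz 139; Negz 127; Negz 113; Posz 16; Posz 6; Posz 18; Posz 16; Posz 5; Posz 19; Posz 23; Posz 26; Posz 39; Posz 23; Posz 26; Posz 38; Posz 49; Posz 50; Posz 50; Posz 50; Posz 276; Negz 28];
  [:: Negz 113; Negz 127; Negz 139; Negz 135; Negz 132; Negz 111; Posz 19; Posz 5; Posz 16; Posz 18; Posz 6; Posz 16; Posz 26; Posz 23; Posz 39; Posz 26; Posz 23; Posz 38; Posz 50; Posz 50; Posz 50; Posz 49; Posz 276; Negz 28];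
  [:: Negz 139; Negz 113; Negz 127; Negz 111; Negz 135; Negz 132; Posz 16; Posz 19; Posz 5; Posz 16; Posz 18; Posz 6; Posz 38; Posz 26; Posz 23; Posz 39; Posz 26; Posz 23; Posz 50; Posz 50; Posz 49; Posz 50; Posz 276; Negz 28];
  [:: Negz 127; Negz 139; Negz 113; Negz 132; Negz 111; Negz 135; Posz 6; Posz 16; Posz 19; Posz 5; Posz 16; Posz 18; Posz 23; Posz 38; Posz 26; Posz 23; Posz 39; Posz 26; Posz 50; Posz 50; Posz 50; Posz 49; Posz 276; Negz 28];
  [:: Negz 113; Negz 127; Negz 139; Negz 135; Negz 132; Negz 111; Posz 18; Posz 6; Posz 16; Posz 19; Posz 5; Posz 16; Posz 26; Posz 23; Posz 38; Posz 26; Posz 23; Posz 39; Posz 50; Posz 50; Posz 49; Posz 50; Posz 276; Negz 28];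
  [:: Negz 139; Negz 113; Negz 127; Negz 111; Negz 135; Negz 132; Posz 16; Posz 18; Posz 6; Posz 16; Posz 19; Posz 5; Posz 39; Posz 26; Posz 23; Posz 38; Posz 26; Posz 23; Posz 50; Posz 50; Posz 50; Posz 49; Posz 276; Negz 28];
  [:: Negz 127; Negz 139; Negz 113; Negz 132; Negz 111; Negz 135; Posz 5; Posz 16; Posz 18; Posz 6; Posz 16; Posz 19; Posz 23; Posz 39; Posz 26; Posz 23; Posz 38; Posz 26; Posz 50; Posz 50; Posz 49; Posz 50; Posz 276; Negz 28];
  [:: Posz 295; Posz 282; Posz 325; Posz 295; Posz 325; Posz 282; Negz 44; Negz 24; Negz 24; Negz 44; Negz 24; Negz 24; Negz 76; Negz 52; Negz 76; Negz 76; Negz 52; Negz 76; Negz 117; Negz 117; Negz 117; Negz 117; Negz 652; Posz 69];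
  [:: Posz 325; Posz 295; Posz 282; Posz 282; Posz 295; Posz 325; Negz 24; Negz 44; Negz 24; Negz 24; Negz 44; Negz 24; Negz 76; Negz 76; Negz 52; Negz 76; Negz 76; Negz 52; Negz 117; Negz 117; Negz 117; Negz 117; Negz 652; Posz 69];
  [:: Posz 282; Posz 325; Posz 295; Posz 325; Posz 282; Posz 295; Negz 24; Negz 24; Negz 44; Negz 24; Negz 24; Negz 44; Negz 52; Negz 76; Negz 76; Negz 52; Negz 76; Negz 76; Negz 117; Negz 117; Negz 117; Negz 117; Negz 652; Posz 69];
  [:: Negz 702; Negz 698; Negz 711; Negz 702; Negz 711; Negz 698; Posz 78; Posz 72; Posz 72; Posz 78; Posz 72; Posz 72; Posz 164; Posz 157; Posz 164; Posz 164; Posz 157; Posz 164; Posz 276; Posz 276; Posz 276; Posz 276; Posz 1530; Negz 160];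
  [:: Negz 711; Negz 702; Negz 698; Negz 698; Negz 702; Negz 711; Posz 72; Posz 78; Posz 72; Posz 72; Posz 78; Posz 72; Posz 164; Posz 164; Posz 157; Posz 164; Posz 164; Posz 157; Posz 276; Posz 276; Posz 276; Posz 276; Posz 1530; Negz 160];
  [:: Negz 698; Negz 711; Negz 702; Negz 711; Negz 698; Negz 702; Posz 72; Posz 72; Posz 78; Posz 72; Posz 72; Posz 78; Posz 157; Posz 164; Posz 164; Posz 157; Posz 164; Posz 164; Posz 276; Posz 276; Posz 276; Posz 276; Posz 1530; Negz 160];
  [:: Posz 104; Posz 104; Posz 104; Posz 105; Posz 105; Posz 105; Negz 10; Negz 10; Negz 10; Negz 10; Negz 10; Negz 10; Negz 23; Negz 23; Negz 23; Negz 23; Negz 23; Negz 23; Negz 39; Negz 39; Negz 41; Negz 41; Negz 226; Posz 24];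
  [:: Posz 105; Posz 105; Posz 105; Posz 104; Posz 104; Posz 104; Negz 10; Negz 10; Negz 10; Negz 10; Negz 10; Negz 10; Negz 23; Negz 23; Negz 23; Negz 23; Negz 23; Negz 23; Negz 41; Negz 41; Negz 39; Negz 39; Negz 226; Posz 24];
  [:: Posz 157; Posz 157; Posz 157; Posz 157; Posz 157; Posz 157; Negz 16; Negz 15; Negz 16; Negz 15; Negz 16; Negz 15; Negz 35; Negz 35; Negz 35; Negz 35; Negz 35; Negz 35; Negz 61; Negz 60; Negz 61; Negz 60; Negz 340; Posz 36];
  [:: Posz 157; Posz 157; Posz 157; Posz 157; Posz 157; Posz 157; Negz 15; Negz 16; Negz 15; Negz 16; Negz 15; Negz 16; Negz 35; Negz 35; Negz 35; Negz 35; Negz 35; Negz 35; Negz 60; Negz 61; Negz 60; Negz 61; Negz 340; Posz 36];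
  [:: Posz 438; Posz 438; Posz 438; Posz 438; Posz 438; Posz 438; Negz 45; Negz 45; Negz 45; Negz 45; Negz 45; Negz 45; Negz 100; Negz 99; Negz 100; Negz 99; Negz 100; Negz 99; Negz 170; Negz 171; Negz 171; Negz 170; Negz 950; Posz 100];
  [:: Posz 438; Posz 438; Posz 438; Posz 438; Posz 438; Posz 438; Negz 45; Negz 45; Negz 45; Negz 45; Negz 45; Negz 45; Negz 99; Negz 100; Negz 99; Negz 100; Negz 99; Negz 100; Negz 171; Negz 170; Negz 170; Negz 171; Negz 950; Posz 100]].

Local Open Scope group_scope.

Definition dmul (x y : nat) : nat := (nth 0 (nth [::] mtab x) y) %% 12.
Definition dinv (x : nat) : nat := (nth 0 itab x) %% 12.
Definition wv (d x : nat) : nat :=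
  let y := (x + d %% 6) %% 6 in if d %/ 6 == 0 then y else (6 - y) %% 6.
Definition w (d : nat) : {perm 'I_6} := r6 ^+ (d %% 6) * s6 ^+ (d %/ 6).

Lemma allIota m n P : all P (iota m n) -> forall i, m <= i < m + n -> P i.
Proof. by move/allP=> h i hi; apply: h; rewrite mem_iota. Qed.
Lemma allI n P : all P (iota 0 n) -> forall i, i < n -> P i.
Proof. by move=> h i hi; apply: (allIota h). Qed.

Lemma dmul_lt x y : dmul x y < 12. Proof. exact: ltn_pmod. Qed.
Lemma dinv_lt x : dinv x < 12. Proof. exact: ltn_pmod. Qed.

Lemma val_r6 (x : 'I_6) : val (r6 x) = (val x + 1) %% 6.
Proof. by rewrite permE. Qed.
Lemma val_s6 (x : 'I_6) : val (s6 x) = (6 - val x) %% 6.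
Proof. by rewrite permE. Qed.

Lemma val_iter_r6 k (x : 'I_6) : val (iter k r6 x) = (val x + k) %% 6.
Proof.
elim: k => [|k IH] /=; first by rewrite addn0 modn_small.
by rewrite val_r6 IH modnDml addn1 addnS.
Qed.

Lemma wvE d (x : 'I_6) : d < 12 -> val (w d x) = wv d (val x).
Proof.
move=> hd; rewrite /w permM !permX /wv.
have : d %/ 6 < 2 by rewrite ltn_divLR.
by case: (d %/ 6) => [|[|//]] _ /=; rewrite ?val_s6 val_iter_r6.
Qed.

Lemma mulcheck : all (fun x => all (fun y => all (fun i => wv (dmul x y) i == wv y (wv x i)) (iota 0 6)) (iota 0 12)) (iota 0 12).
Proof. by vm_compute. Qed.

Lemma wM x y : x < 12 -> y < 12 -> w x * w y = w (dmul x y).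
Proof.
move=> hx hy; apply/permP => i; apply: val_inj.
rewrite permM !wvE ?dmul_lt //; apply/esym/eqP.
exact: (allI (allI (allI mulcheck hx) hy) (ltn_ord i)).
Qed.

Lemma injcheck : all (fun x => all (fun y => (wv x 0 == wv y 0) && (wv x 1 == wv y 1) ==> (x == y)) (iota 0 12)) (iota 0 12).
Proof. by vm_compute. Qed.

Lemma w_inj x y : x < 12 -> y < 12 -> w x = w y -> x = y.
Proof.
move=> hx hy e.
have e0 := congr1 (fun p : {perm 'I_6} => val (p ord0)) e.
have e1 := congr1 (fun p : {perm 'I_6} => val (p (Ordinal (isT : 1 < 6)))) e.
move: e0 e1 => /= ; rewrite !wvE // => e0 e1.
by apply/eqP; move: (allI (allI injcheck hx) hy); rewrite e0 e1 !eqxx.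
Qed.

Lemma w0 : w 0 = 1. Proof. by rewrite /w !expg0 mulg1. Qed.
Lemma w1 : w 1%N = r6. Proof. by rewrite /w expg0 mulg1 expg1. Qed.
Lemma w2 : w 2 = r6 ^+ 2. Proof. by rewrite /w expg0 mulg1. Qed.
Lemma w3 : w 3 = r6 ^+ 3. Proof. by rewrite /w expg0 mulg1. Qed.
Lemma w6 : w 6 = s6. Proof. by rewrite /w expg0 mul1g expg1. Qed.
Lemma w7 : w 7 = r6 * s6. Proof. by rewrite /w !expg1. Qed.

Lemma invcheck : all (fun x => dmul x (dinv x) == 0) (iota 0 12).
Proof. by vm_compute. Qed.

Lemma wV x : x < 12 -> (w x)^-1 = w (dinv x).
Proof.
move=> hx; apply/eqP; rewrite eq_invg_mul wM ?dinv_lt //.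
by rewrite (eqP (allI invcheck hx)) w0.
Qed.

Lemma w_D6 d : w d \in D6.
Proof. by rewrite /w groupM // groupX // mem_gen // !inE eqxx ?orbT. Qed.


Fixpoint clos (gl : seq nat) (k : nat) : seq nat :=
  if k is k'.+1 then
    let R := clos gl k' in undup (R ++ [seq dmul x g | x <- R, g <- gl])
  else [:: 0].

Lemma clos_lt gl k e : all (fun g => g < 12) gl -> e \in clos gl k -> e < 12.
Proof.
move=> hgl; elim: k e => [|k IH] e /=; first by rewrite inE => /eqP ->.
rewrite mem_undup mem_cat => /orP[/IH //|/allpairsP[[x g] [_ _ ->]]].
exact: dmul_lt.
Qed.

Lemma clos_gen (A : {set {perm 'I_6}}) gl k :
  all (fun g => g < 12) gl -> (forall g, g \in gl -> w g \in A) ->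
  forall e, e \in clos gl k -> w e \in <<A>>.
Proof.
move=> hgl hA; elim: k => [|k IH] e /=; first by rewrite inE => /eqP ->; rewrite w0 group1.
rewrite mem_undup mem_cat => /orP[/IH //|/allpairsP[[x g] [/= hx hg ->]]].
rewrite -wM ?(clos_lt hgl hx) ?(allP hgl) //.
by apply: groupM; [apply: IH | apply: mem_gen; apply: hA].
Qed.

Lemma gen_in (A : {set {perm 'I_6}}) gl (R : seq nat) :
  (forall x, x \in A -> exists2 g, g \in gl & x = w g) ->
  all (fun g => g < 12) gl -> 0 \in R -> all (fun x => x < 12) R ->
  all (fun x => all (fun g => dmul x g \in R) gl) R ->
  forall x, x \in <<A>> -> exists2 e, e \in R & x = w e.
Proof.
move=> hA hgl h0 hR hcl x /gen_prodgP[n [c hc ->]].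
elim: n c hc => [|n IH] c hc; first by exists 0; rewrite // big_ord0 w0.
rewrite big_ord_recr /=.
have [e he ->] := IH (fun i => c (widen_ord (leqnSn n) i)) (fun i => hc _).
have [g hg ->] := hA _ (hc ord_max).
exists (dmul e g); last by rewrite wM ?(allP hR e he) ?(allP hgl g hg).
by have /allP := allP hcl e he; apply.
Qed.

Lemma mem_gen_w (A : {set {perm 'I_6}}) gl k d :
  (forall x, x \in A -> exists2 g, g \in gl & x = w g) ->
  (forall g, g \in gl -> w g \in A) ->
  all (fun g => g < 12) gl ->
  all (fun x => all (fun g => dmul x g \in clos gl k) gl) (clos gl k) ->
  d < 12 -> (w d \in <<A>>) = (d \in clos gl k).
Proof.
move=> hA1 hA2 hgl hcl hd; apply/idP/idP; last exact: clos_gen.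
have h0 : 0 \in clos gl k by elim: k {hcl} => [|k IH] //=; rewrite mem_undup mem_cat IH.
have hR : all (fun x => x < 12) (clos gl k) by apply/allP => x; apply: clos_lt.
move=> /(gen_in hA1 hgl h0 hR hcl)[e he /w_inj ->] //.
exact: (allP hR).
Qed.

Lemma mem_gen_w2 a b k d : a < 12 -> b < 12 ->
  all (fun x => all (fun g => dmul x g \in clos [:: a; b] k) [:: a; b]) (clos [:: a; b] k) ->
  d < 12 -> (w d \in <<[set w a; w b]>>) = (d \in clos [:: a; b] k).
Proof.
move=> ha hb hcl hd; apply: mem_gen_w => //; last by rewrite /= ha hb.
- by move=> x; rewrite !inE => /orP[] /eqP ->; [exists a | exists b]; rewrite ?inE ?eqxx ?orbT.
- by move=> g; rewrite !inE => /orP[] /eqP ->; rewrite eqxx ?orbT.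
Qed.

Lemma mem_gen_w1 a k d : a < 12 ->
  all (fun x => all (fun g => dmul x g \in clos [:: a] k) [:: a]) (clos [:: a] k) ->
  d < 12 -> (w d \in <[w a]>) = (d \in clos [:: a] k).
Proof.
move=> ha hcl hd; apply: mem_gen_w => //; last by rewrite /= ha.
- by move=> x; rewrite !inE => /eqP ->; exists a; rewrite ?inE.
- by move=> g; rewrite !inE => /eqP ->.
Qed.

Lemma D6_w x : x \in D6 -> exists2 e, e < 12 & x = w e.
Proof.
have -> : D6 = <<[set w 1%N; w 6]>> by rewrite w1 w6.
move=> /(@gen_in _ [:: 1%N; 6] (clos [:: 1%N; 6] 12))[].
- by move=> y; rewrite !inE => /orP[] /eqP ->; [exists 1%N | exists 6].
- by [].
- by vm_compute.
- by vm_compute.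
- by vm_compute.
- move=> e he ->; exists e; last by [].
  exact: (clos_lt (isT : all (fun g => g < 12) [:: 1%N; 6]) he).
Qed.


Section Pts.
Variable Hs : seq {set {perm 'I_6}}.
Variable memR : nat -> seq nat.
Variable rep : seq (nat * nat).
Hypothesis Hgrp : forall i, i < size Hs -> group_set (nth set0 Hs i).
Hypothesis Hmem : forall i d, i < size Hs -> d < 12 ->
  (w d \in nth set0 Hs i) = (d \in memR i).

Definition repi a := (nth (0, 0) rep a).1.
Definition repd a := (nth (0, 0) rep a).2.
Definition Pc (i d a : nat) := (repi a == i) && (dmul (dinv (repd a)) d \in memR i).
Definition actn (g a : nat) := find (Pc (repi a) (dmul g (repd a))) (iota 0 24).

Hypothesis C1 : all (fun a => (repi a < size Hs) && (repd a < 12)) (iota 0 24).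
Hypothesis C2 : all (fun a => all (fun b =>
   (repi a == repi b) && (dmul (dinv (repd a)) (repd b) \in memR (repi a)) ==> (a == b))
   (iota 0 24)) (iota 0 24).
Hypothesis C3 : all (fun i => all (fun d => has (Pc i d) (iota 0 24)) (iota 0 12)) (iota 0 (size Hs)).

Lemma repiP (a : 'I_24) : repi a < size Hs.
Proof. by case/andP: (allI C1 (ltn_ord a)). Qed.
Lemma repdP a : a < 24 -> repd a < 12.
Proof. by move=> h; case/andP: (allI C1 h). Qed.

Definition ri (a : 'I_24) : 'I_(size Hs) := Ordinal (repiP a).
Definition Hgr (i : 'I_(size Hs)) : {group {perm 'I_6}} := Group (Hgrp (ltn_ord i)).

Lemma gam_proof (a : 'I_24) :
  (w (repd a) *: nth set0 Hs (ri a)) \in lcosets (nth set0 Hs (ri a)) D6.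
Proof. by apply/lcosetsP; exists (w (repd a)); rewrite ?w_D6. Qed.

Definition gam (a : 'I_24) : pl_pt D6 Hs :=
  exist _ (ri a, w (repd a) *: nth set0 Hs (ri a)) (gam_proof a).

Lemma coset_eq (i : 'I_(size Hs)) d e : d < 12 -> e < 12 ->
  (w d *: nth set0 Hs i == w e *: nth set0 Hs i) = (dmul (dinv d) e \in memR i).
Proof.
move=> hd he.
have -> : nth set0 Hs i = Hgr i by [].
apply/eqP/idP => [E|h].
- have : w e \in w d *: Hgr i by rewrite E; apply: lcoset_refl.
  by rewrite mem_lcoset wV // wM ?dinv_lt // Hmem ?dmul_lt.
- apply/esym/lcoset_eqP; rewrite mem_lcoset wV // wM ?dinv_lt //.
  by rewrite /= Hmem ?dmul_lt.
Qed.

Lemma gam_inj : injective gam.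
Proof.
move=> a b /(congr1 val) [E1 E2].
have hc : dmul (dinv (repd a)) (repd b) \in memR (repi a).
  rewrite -(coset_eq (ri a) (repdP (ltn_ord a)) (repdP (ltn_ord b))) /=.
  by rewrite E2 -E1.
have := allI (allI C2 (ltn_ord a)) (ltn_ord b).
by rewrite hc E1 eqxx /= => /eqP /val_inj.
Qed.

Lemma gam_surj p : exists a, p = gam a.
Proof.
case: p => [[i C] hC].
have [x hx EC] : exists2 x, x \in D6 & C = x *: nth set0 Hs i by apply/lcosetsP.
have [d hd Ex] := D6_w hx.
have := allI (allI C3 (ltn_ord i)) hd.
case/hasP => a; rewrite mem_iota /= add0n => ha /andP[/eqP hia hP].
exists (Ordinal ha); apply: val_inj => /=.
have E : ri (Ordinal ha) = i by apply: val_inj.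
rewrite E EC Ex; congr (_, _); rewrite hia; apply/eqP; rewrite eq_sym (coset_eq i) ?repdP //.
Qed.

Lemma actn_lt g a : g < 12 -> a < 24 -> actn g a < 24.
Proof.
move=> hg ha; rewrite /actn -[24]/(size (iota 0 24)) -has_find.
have hi : repi a < size Hs by case/andP: (allI C1 ha).
exact: (allI (allI C3 hi) (dmul_lt _ _)).
Qed.

Lemma actn_P g a : g < 12 -> a < 24 -> Pc (repi a) (dmul g (repd a)) (actn g a).
Proof.
move=> hg ha; have := actn_lt hg ha; rewrite /actn => h.
have -> : find (Pc (repi a) (dmul g (repd a))) (iota 0 24)
   = nth 0 (iota 0 24) (find (Pc (repi a) (dmul g (repd a))) (iota 0 24)) by rewrite nth_iota.
apply: nth_find; rewrite has_find size_iota //.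
Qed.

Definition aX (g : nat) (a : 'I_24) : 'I_24 := inord (actn g a).

Lemma aXE g (a : 'I_24) : g < 12 -> nat_of_ord (aX g a) = actn g a.
Proof. by move=> hg; rewrite inordK // actn_lt. Qed.

Lemma gam_act g a : g < 12 -> pl_act (w g) (gam a) = gam (aX g a).
Proof.
move=> hg; rewrite /pl_act; case: insubP => [u _ Eu|nP] /=.
- apply: val_inj; rewrite Eu /=.
  have hP := actn_P hg (ltn_ord a); rewrite -(aXE a hg) in hP.
  case/andP: hP => /eqP hi hm.
  have E : ri (aX g a) = ri a by apply: val_inj.
  rewrite E; congr (_, _).
  rewrite hi -lcosetM wM ?(repdP (ltn_ord a)) //; apply/eqP.
  by rewrite eq_sym (coset_eq (ri a) (repdP (ltn_ord _)) (dmul_lt _ _)).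
- case/negP: nP; rewrite /= -lcosetM; apply/lcosetsP; exists (w g * w (repd a)) => //.
  by rewrite groupM ?w_D6.
Qed.

End Pts.


Local Open Scope ring_scope.

Lemma dsum (A : 'I_24 -> int) (B : 'I_24 -> 'I_24 -> int) (h : 'I_24 -> int) :
  \sum_(b < 24) A b * (\sum_(a < 24) B b a * h a) = \sum_(a < 24) (\sum_(b < 24) A b * B b a) * h a.
Proof.
under eq_bigr do rewrite big_distrr.
rewrite exchange_big; apply: eq_bigr => a _ /=.
rewrite big_distrl; apply: eq_bigr => b _ /=.
by rewrite mulrA.
Qed.

Lemma lattice_iso (Hs Ks : seq {set {perm 'I_6}})
  (gX : 'I_24 -> pl_pt D6 Hs) (gY : 'I_24 -> pl_pt D6 Ks)
  (aX aY : nat -> 'I_24 -> 'I_24) (Mn Nn : nat -> nat -> int) :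
  injective gX -> (forall p, exists a, p = gX a) ->
  injective gY -> (forall p, exists a, p = gY a) ->
  (forall g a, (g < 12)%N -> pl_act (w g) (gX a) = gX (aX g a)) ->
  (forall g a, (g < 12)%N -> pl_act (w g) (gY a) = gY (aY g a)) ->
  (forall g (a b : 'I_24), (g < 12)%N -> Mn (aY g b) (aX g a) = Mn b a) ->
  (forall g a, (g < 12)%N -> aX (dinv g) (aX g a) = a) ->
  (forall g b, (g < 12)%N -> aY g (aY (dinv g) b) = b) ->
  (forall b b' : 'I_24, \sum_(a < 24) Mn b a * Nn a b' = (b == b')%:R) ->
  (forall a a' : 'I_24, \sum_(b < 24) Nn a b * Mn b a' = (a == a')%:R) ->
  G_lattice_iso D6 Hs Ks.
Proof.
move=> iX sX iY sY eX eY inv aXK aYK MN NM.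
pose jX p := odflt ord0 [pick a | gX a == p].
pose jY p := odflt ord0 [pick a | gY a == p].
have jXK p : gX (jX p) = p.
  rewrite /jX; case: pickP => [a /eqP //|/= h]; have [a Ea] := sX p.
  by move: (h a); rewrite -Ea eqxx.
have jYK p : gY (jY p) = p.
  rewrite /jY; case: pickP => [a /eqP //|/= h]; have [a Ea] := sY p.
  by move: (h a); rewrite -Ea eqxx.
have gXK a : jX (gX a) = a by apply: iX; rewrite jXK.
have gYK a : jY (gY a) = a by apply: iY; rewrite jYK.
pose phi (f : perm_lattice D6 Hs) : perm_lattice D6 Ks :=
  [ffun y => \sum_(a < 24) Mn (jY y) a * f (gX a)].
pose psi (f : perm_lattice D6 Ks) : perm_lattice D6 Hs :=
  [ffun x => \sum_(b < 24) Nn (jX x) b * f (gY b)].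
exists phi; split.
- move=> f1 f2; apply/ffunP => y; rewrite !ffunE -big_split /=.
  by apply: eq_bigr => a _; rewrite !ffunE mulrDr.
- exists psi.
  + move=> f; apply/ffunP => x; rewrite ffunE.
    under eq_bigr do rewrite ffunE gYK.
    rewrite dsum.
    under eq_bigr do rewrite NM.
    rewrite (bigD1 (jX x)) //= eqxx mul1r big1 ?addr0 ?jXK //.
    by move=> a /negbTE; rewrite eq_sym => ->; rewrite mul0r.
  + move=> f; apply/ffunP => y; rewrite ffunE.
    under eq_bigr do rewrite ffunE gXK.
    rewrite dsum.
    under eq_bigr do rewrite MN.
    rewrite (bigD1 (jY y)) //= eqxx mul1r big1 ?addr0 ?jYK //.
    by move=> a /negbTE; rewrite eq_sym => ->; rewrite mul0r.
- move=> g /D6_w[c hc ->] f; apply/ffunP => y; rewrite !ffunE.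
  rewrite wV //.
  under eq_bigr do rewrite ffunE wV // eX ?dinv_lt //.
  have injc : injective (aX c).
    by move=> a1 a2 /(congr1 (aX (dinv c))); rewrite !aXK.
  rewrite (reindex_inj injc) /=.
  under eq_bigr do rewrite aXK //.
  rewrite -[in RHS](jYK y) eY ?dinv_lt // gYK.
  apply: eq_bigr => a _; congr (_ * _).
  by rewrite -(inv c a _ hc) aYK.
Qed.


Local Close Scope ring_scope.
Local Open Scope group_scope.

Definition HsX : seq {set {perm 'I_6}} :=
  [:: [1 {perm 'I_6}]%g; <<[set (r6 ^+ 3)%g; s6]>>%g; <<[set (r6 ^+ 3)%g; s6]>>%g;
      <[r6]>%g; <<[set (r6 ^+ 2)%g; s6]>>%g; <<[set (r6 ^+ 2)%g; (r6 * s6)%g]>>%g].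
Definition KsY : seq {set {perm 'I_6}} :=
  [:: <[(r6 ^+ 3)%g]>%g; <[s6]>%g; <[(r6 * s6)%g]>%g; <[(r6 ^+ 2)%g]>%g; D6; D6].

Definition memX (i : nat) : seq nat :=
  match i with
  | 0 => [:: 0]
  | 1 | 2 => [:: 3; 6; 9; 0]
  | 3 => [:: 1%N; 2; 3; 4; 5; 0]
  | 4 => [:: 6; 2; 4; 8; 10; 0]
  | _ => [:: 7; 2; 4; 9; 11; 0]
  end.
Definition memY (i : nat) : seq nat :=
  match i with
  | 0 => [:: 3; 0]
  | 1 => [:: 6; 0]
  | 2 => [:: 7; 0]
  | 3 => [:: 2; 4; 0]
  | _ => [:: 3; 8; 10; 5; 1%N; 6; 9; 4; 2; 7; 11; 0]
  end.

Lemma cl36 : clos [:: 3; 6] 12 = [:: 3; 6; 9; 0]. Proof. by vm_compute. Qed.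
Lemma cl1 : clos [:: 1%N] 12 = [:: 1%N; 2; 3; 4; 5; 0]. Proof. by vm_compute. Qed.
Lemma cl26 : clos [:: 2; 6] 12 = [:: 6; 2; 4; 8; 10; 0]. Proof. by vm_compute. Qed.
Lemma cl27 : clos [:: 2; 7] 12 = [:: 7; 2; 4; 9; 11; 0]. Proof. by vm_compute. Qed.
Lemma cl3 : clos [:: 3] 12 = [:: 3; 0]. Proof. by vm_compute. Qed.
Lemma cl6 : clos [:: 6] 12 = [:: 6; 0]. Proof. by vm_compute. Qed.
Lemma cl7 : clos [:: 7] 12 = [:: 7; 0]. Proof. by vm_compute. Qed.
Lemma cl2 : clos [:: 2] 12 = [:: 2; 4; 0]. Proof. by vm_compute. Qed.
Lemma cl16 : clos [:: 1%N; 6] 12 = [:: 3; 8; 10; 5; 1%N; 6; 9; 4; 2; 7; 11; 0]. Proof. by vm_compute. Qed.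

Lemma HgrpX i : (i < size HsX)%N -> group_set (nth set0 HsX i).
Proof.
case: i => [|[|[|[|[|[|//]]]]]] _ /=; first exact: group_set_one.
all: exact: (valP <<_>>%G).
Qed.
Lemma HgrpY i : (i < size KsY)%N -> group_set (nth set0 KsY i).
Proof. by case: i => [|[|[|[|[|[|//]]]]]] _ /=; exact: (valP <<_>>%G). Qed.



Lemma mem_gen_w2' a b L d : (a < 12)%N -> (b < 12)%N -> clos [:: a; b] 12 = L ->
  all (fun x => all (fun g => dmul x g \in L) [:: a; b]) L ->
  (d < 12)%N -> (w d \in <<[set w a; w b]>>) = (d \in L).
Proof. by move=> ha hb <- hcl hd; apply: mem_gen_w2. Qed.

Lemma mem_gen_w1' a L d : (a < 12)%N -> clos [:: a] 12 = L ->
  all (fun x => all (fun g => dmul x g \in L) [:: a]) L ->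
  (d < 12)%N -> (w d \in <[w a]>) = (d \in L).
Proof. by move=> ha <- hcl hd; apply: mem_gen_w1. Qed.

Lemma HmemX i d : (i < size HsX)%N -> (d < 12)%N ->
  (w d \in nth set0 HsX i) = (d \in memX i).
Proof.
case: i => [|[|[|[|[|[|//]]]]]] _ hd.
- rewrite /= !inE; apply/eqP/eqP => [E|->]; last exact: w0.
  by apply: w_inj => //; rewrite E w0.
- rewrite /= -w3 -w6; exact: (@mem_gen_w2' 3 6 _ d isT isT cl36 isT hd).
- rewrite /= -w3 -w6; exact: (@mem_gen_w2' 3 6 _ d isT isT cl36 isT hd).
- rewrite /= -w1; exact: (@mem_gen_w1' 1%N _ d isT cl1 isT hd).
- rewrite /= -w2 -w6; exact: (@mem_gen_w2' 2 6 _ d isT isT cl26 isT hd).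
- rewrite /= -w7 -w2; exact: (@mem_gen_w2' 2 7 _ d isT isT cl27 isT hd).
Qed.

Lemma HmemY i d : (i < size KsY)%N -> (d < 12)%N ->
  (w d \in nth set0 KsY i) = (d \in memY i).
Proof.
case: i => [|[|[|[|[|[|//]]]]]] _ hd.
- rewrite /= -w3; exact: (@mem_gen_w1' 3 _ d isT cl3 isT hd).
- rewrite /= -w6; exact: (@mem_gen_w1' 6 _ d isT cl6 isT hd).
- rewrite /= -w7; exact: (@mem_gen_w1' 7 _ d isT cl7 isT hd).
- rewrite /= -w2; exact: (@mem_gen_w1' 2 _ d isT cl2 isT hd).
- rewrite /= /D6 -w1 -w6; exact: (@mem_gen_w2' 1%N 6 _ d isT isT cl16 isT hd).
- rewrite /= /D6 -w1 -w6; exact: (@mem_gen_w2' 1%N 6 _ d isT isT cl16 isT hd).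
Qed.


Local Open Scope ring_scope.

Definition Mn (b a : nat) : int := nth 0 (nth [::] Mtab b) a.
Definition Nn (b a : nat) : int := nth 0 (nth [::] Ntab b) a.

Lemma sum_iota n m (F : nat -> int) :
  \sum_(i < n) F (m + i)%N = foldr (fun i acc => F i + acc) 0 (iota m n).
Proof.
elim: n m => [|n IH] m; first by rewrite big_ord0.
rewrite big_ord_recl /= addn0 -IH; congr (_ + _).
by apply: eq_bigr => i _; rewrite /= addSnnS.
Qed.

Lemma MNcheck : all (fun b => all (fun b' =>
  foldr (fun a acc => Mn b a * Nn a b' + acc) 0 (iota 0 24) == (b == b')%:R) (iota 0 24)) (iota 0 24).
Proof. by vm_compute. Qed.
Lemma NMcheck : all (fun b => all (fun b' =>
  foldr (fun a acc => Nn b a * Mn a b' + acc) 0 (iota 0 24) == (b == b')%:R) (iota 0 24)) (iota 0 24).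
Proof. by vm_compute. Qed.

Local Close Scope ring_scope.

Lemma invcheck2 : all (fun g => all (fun b => all (fun a =>
   Mn (actn memY repYtab g b) (actn memX repXtab g a) == Mn b a) (iota 0 24)) (iota 0 24)) (iota 0 12).
Proof. by vm_compute. Qed.
Lemma aXcheck : all (fun g => all (fun a =>
   actn memX repXtab (dinv g) (actn memX repXtab g a) == a) (iota 0 24)) (iota 0 12).
Proof. by vm_compute. Qed.
Lemma aYcheck : all (fun g => all (fun b =>
   actn memY repYtab g (actn memY repYtab (dinv g) b) == b) (iota 0 24)) (iota 0 12).
Proof. by vm_compute. Qed.

Lemma cX1 : all (fun a => (repi repXtab a < size HsX) && (repd repXtab a < 12)) (iota 0 24).
Proof. by change (all (fun a => (repi repXtab a < 6) && (repd repXtab a < 12)) (iota 0 24)); vm_compute. Qed.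
Lemma cY1 : all (fun a => (repi repYtab a < size KsY) && (repd repYtab a < 12)) (iota 0 24).
Proof. by change (all (fun a => (repi repYtab a < 6) && (repd repYtab a < 12)) (iota 0 24)); vm_compute. Qed.
Lemma cX2 : all (fun a => all (fun b =>
   (repi repXtab a == repi repXtab b) && (dmul (dinv (repd repXtab a)) (repd repXtab b) \in memX (repi repXtab a)) ==> (a == b))
   (iota 0 24)) (iota 0 24).
Proof. by vm_compute. Qed.
Lemma cY2 : all (fun a => all (fun b =>
   (repi repYtab a == repi repYtab b) && (dmul (dinv (repd repYtab a)) (repd repYtab b) \in memY (repi repYtab a)) ==> (a == b))
   (iota 0 24)) (iota 0 24).
Proof. by vm_compute. Qed.
Lemma cX3 : all (fun i => all (fun d => has (Pc memX repXtab i d) (iota 0 24)) (iota 0 12)) (iota 0 (size HsX)).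
Proof. by change (all (fun i => all (fun d => has (Pc memX repXtab i d) (iota 0 24)) (iota 0 12)) (iota 0 6)); vm_compute. Qed.
Lemma cY3 : all (fun i => all (fun d => has (Pc memY repYtab i d) (iota 0 24)) (iota 0 12)) (iota 0 (size KsY)).
Proof. by change (all (fun i => all (fun d => has (Pc memY repYtab i d) (iota 0 24)) (iota 0 12)) (iota 0 6)); vm_compute. Qed.

Lemma main_iso : G_lattice_iso D6 HsX KsY.
Proof.
apply: (@lattice_iso HsX KsY (gam cX1) (gam cY1) (aX memX repXtab) (aX memY repYtab) Mn Nn).
- exact: (gam_inj HgrpX HmemX cX2).
- exact: (gam_surj HgrpX HmemX cX1 cX3).
- exact: (gam_inj HgrpY HmemY cY2).
- exact: (gam_surj HgrpY HmemY cY1 cY3).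
- by move=> g a hg; apply: (gam_act HgrpX HmemX cX1 cX3).
- by move=> g a hg; apply: (gam_act HgrpY HmemY cY1 cY3).
- move=> g a b hg.
  apply: (etrans (congr2 Mn (aXE cY1 cY3 b hg) (aXE cX1 cX3 a hg))); apply/eqP.
  exact: (allI (allI (allI invcheck2 hg) (ltn_ord b)) (ltn_ord a)).
- move=> g a hg; apply: val_inj.
  apply: (etrans (aXE cX1 cX3 (aX memX repXtab g a) (dinv_lt g))).
  apply: (etrans (congr1 (actn memX repXtab (dinv g)) (aXE cX1 cX3 a hg))).
  by apply/eqP; exact: (allI (allI aXcheck hg) (ltn_ord a)).
- move=> g b hg; apply: val_inj.
  apply: (etrans (aXE cY1 cY3 (aX memY repYtab (dinv g) b) hg)).
  apply: (etrans (congr1 (actn memY repYtab g) (aXE cY1 cY3 b (dinv_lt g)))).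
  by apply/eqP; exact: (allI (allI aYcheck hg) (ltn_ord b)).
- move=> b b'; apply: (etrans (sum_iota 24 0 (fun a => Mn b a * Nn a b')%R)); apply/eqP.
  exact: (allI (allI MNcheck (ltn_ord b)) (ltn_ord b')).
- move=> b b'; apply: (etrans (sum_iota 24 0 (fun a => Nn b a * Mn a b')%R)); apply/eqP.
  exact: (allI (allI NMcheck (ltn_ord b)) (ltn_ord b')).
Qed.

Local Close Scope group_scope.

Theorem proposition6p3 :
  let r := r6 in let s := s6 in
  let C2_1 := <[(r ^+ 3)%g]>%g in
  let C2_2 := <[s]>%g in
  let C2_3 := <[(r * s)%g]>%g in
  let C3 := <[(r ^+ 2)%g]>%g in
  let C2xC2 := <<[set (r ^+ 3)%g; s]>>%g in
  let C6 := <[r]>%g in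
  let S3_1 := <<[set (r ^+ 2)%g; s]>>%g in
  let S3_2 := <<[set (r ^+ 2)%g; (r * s)%g]>>%g in
  G_lattice_iso D6
    [:: [1 {perm 'I_6}]%g; C2xC2; C2xC2; C6; S3_1; S3_2]
    [:: C2_1; C2_2; C2_3; C3; D6; D6].
Proof. exact: main_iso. Qed.
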